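(* Let $n\ge 1$ and $k\ge 2$ be integers and let $T=T^1\times\cdots\times T^n$ be a finite product space with $|T^j|=k$ for every $j$, so $|T|=k^n$. Let $D$ be the uniform distribution on $T$; in particular $D$ is a product distribution $D=D^1\times\cdots\times D^n$, each $D^j$ being uniform on $T^j$. Fix a constant $c$ with $0<c<0.017$. There is an absolute constant $C>0$ (independent of $n,k,m,\varepsilon$) such that for every $\varepsilon\in(0,1/2]$ and every positive integer $m< c\,k^n/\varepsilon^2$, if $S=\{s_1,\dots,s_m\}$ consists of $m$ i.i.d. samples from $D$, then \[\Pr_{S\sim D^m}\big[d_{\mathrm{TV}}(\mathrm{emp}(S),D)>\varepsilon\big]\ \ge\ 1-\frac{C}{k^n}.\]
   Context: For distributions $E,D$ on a finite set $T$, the total variation distance is $d_{\mathrm{TV}}(E,D)=\frac12\sum_{x\in T}|E(x)-D(x)|$, where $E(x)$ is the probability that $E$ assigns to $x$. For a sample multiset $S=\{s_1,\dots,s_m\}\subseteq T$, the empirical distribution is $\mathrm{emp}(S)=\frac1m\sum_{i=1}^m\delta_{s_i}$, where $\delta_s$ is the point mass at $s$; i.e. $\mathrm{emp}(S)(x)=\frac1m\#\{i: s_i=x\}$. *)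

(* Defs.v *)
From HB Require Import structures.
From mathcomp Require Import all_boot all_order all_algebra.
From mathcomp Require Import reals.
Set Implicit Arguments. Unset Strict Implicit. Unset Printing Implicit Defensive.
Import Order.TTheory GRing.Theory Num.Theory.
Local Open Scope ring_scope.

Section Defs.
Variable R : realType.

(* The product space T = T^1 x ... x T^n with |T^j| = k, represented as
   functions 'I_n -> 'I_k (coordinate j takes values in T^j = 'I_k). *)
Definition prodspace (n k : nat) : finType := {ffun 'I_n -> 'I_k}.

Definition dTV (T : finType) (E D : T -> R) : R :=
  2^-1 * \sum_(x : T) `|E x - D x|.

Definition emp (T : finType) (m : nat) (S : {ffun 'I_m -> T}) : T -> R :=
  fun x => #|[set i | S i == x]|%:R / m%:R.

Definition unif_ord (k : nat) : 'I_k -> R := fun _ => k%:R^-1.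

Definition unifD (n k : nat) : prodspace n k -> R :=
  fun t => \prod_(j < n) unif_ord (t j).

Definition iidPr (T : finType) (D : T -> R) (m : nat)
    (A : {ffun 'I_m -> T} -> bool) : R :=
  \sum_(S : {ffun 'I_m -> T} | A S) \prod_(i < m) D (S i).
End Defs.

(* Main.v *)
Require Import Defs.
From HB Require Import structures.
From mathcomp Require Import all_boot all_order all_algebra.
From mathcomp Require Import reals.
From mathcomp Require Import ring lra.
Import Order.TTheory GRing.Theory Num.Theory.
Local Open Scope ring_scope.

Module Aux.
Set Implicit Arguments. Unset Strict Implicit. Unset Printing Implicit Defensive.
Import Order.TTheory GRing.Theory Num.Theory.
Local Open Scope ring_scope.

Section Gen.
Variable R : realType.
Variable T : finType.
Variable D : T -> R.
Hypothesis D0 : forall t, 0 <= D t.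
Hypothesis D1 : \sum_t D t = 1.

Definition Ex m (g : {ffun 'I_m -> T} -> R) : R :=
  \sum_(S : {ffun 'I_m -> T}) (\prod_(i < m) D (S i)) * g S.
Arguments Ex : clear implicits.

Definition fcons m (t : T) (S : {ffun 'I_m -> T}) : {ffun 'I_m.+1 -> T} :=
  [ffun i => if unlift ord0 i is Some j then S j else t].

Lemma fcons0 m t (S : {ffun 'I_m -> T}) : fcons t S ord0 = t.
Proof. by rewrite ffunE unlift_none. Qed.

Lemma fconsS m t (S : {ffun 'I_m -> T}) j : fcons t S (lift ord0 j) = S j.
Proof. by rewrite ffunE liftK. Qed.

Lemma Ex_S m g : Ex m.+1 g = \sum_t D t * Ex m (fun S : {ffun 'I_m -> T} => g (fcons t S)).
Proof.
rewrite /Ex.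
have bij : bijective (fun p : T * {ffun 'I_m -> T} => fcons p.1 p.2).
  exists (fun S : {ffun 'I_m.+1 -> T} => (S ord0, [ffun j => S (lift ord0 j)])).
    case=> t S /=; rewrite fcons0; congr pair; apply/ffunP => j.
    by rewrite ffunE fconsS.
  move=> S /=; apply/ffunP => i; rewrite ffunE.
  by case: unliftP => [j ->|->]; rewrite ?ffunE.
rewrite (reindex _ (onW_bij _ bij)) /= -(pair_big xpredT xpredT (fun t S => (\prod_(i < m.+1) D (fcons t S i)) * g (fcons t S))) /=.
apply: eq_bigr => t _; rewrite mulr_sumr; apply: eq_bigr => S _.
by rewrite big_ord_recl fcons0 mulrA; congr (_ * _ * _); apply: eq_bigr => j _; rewrite fconsS.
Qed.

Lemma Ex1 m : Ex m (fun _ => 1) = 1.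
Proof.
elim: m => [|m IH].
  rewrite /Ex (eq_bigr (fun _ => 1)) => [|S _]; last by rewrite big_ord0 mulr1.
  by rewrite sumr_const cardT -cardE card_ffun card_ord expn0.
by rewrite Ex_S -[RHS]D1; apply: eq_bigr => t _; rewrite IH mulr1.
Qed.

Lemma ExD m f g : Ex m (fun S => f S + g S) = Ex m f + Ex m g.
Proof. by rewrite /Ex -big_split; apply: eq_bigr => S _; rewrite mulrDr. Qed.

Lemma ExZ m a f : Ex m (fun S => a * f S) = a * Ex m f.
Proof. by rewrite /Ex mulr_sumr; apply: eq_bigr => S _; rewrite mulrCA. Qed.

Lemma ExN m f : Ex m (fun S => - f S) = - Ex m f.
Proof. by rewrite /Ex -sumrN; apply: eq_bigr => S _; rewrite mulrN. Qed.

Lemma ExB m f g : Ex m (fun S => f S - g S) = Ex m f - Ex m g.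
Proof. by rewrite ExD ExN. Qed.

Lemma Ex_cst m a : Ex m (fun _ => a) = a.
Proof. by rewrite -[a]mulr1 ExZ Ex1 mulr1. Qed.

Lemma w_ge0 m (S : {ffun 'I_m -> T}) : 0 <= \prod_(i < m) D (S i).
Proof. by apply: prodr_ge0 => i _; apply: D0. Qed.

Lemma Ex_le m f g : (forall S, f S <= g S) -> Ex m f <= Ex m g.
Proof. by move=> H; apply: ler_sum => S _; apply: ler_wpM2l; [apply: w_ge0|apply: H]. Qed.

Lemma Ex_abs m f : `|Ex m f| <= Ex m (fun S => `|f S|).
Proof.
rewrite /Ex; apply: le_trans (ler_norm_sum _ _ _) _.
by apply: ler_sum => S _; rewrite normrM ger0_norm ?w_ge0.
Qed.

Lemma Ex0 h (S0 : {ffun 'I_0 -> T}) : Ex 0 h = h S0.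
Proof.
have E : forall S : {ffun 'I_0 -> T}, S = S0 by move=> S; apply/ffunP => -[].
rewrite -[RHS](Ex_cst 0); apply: eq_bigr => S _; by rewrite (E S).
Qed.

Lemma sq_expand (G : T -> R) b :
  \sum_t D t * (G t - b) ^+ 2 =
  \sum_t D t * G t ^+ 2 - 2%:R * b * \sum_t D t * G t + b ^+ 2 * \sum_t D t.
Proof.
rewrite !mulr_sumr -sumrN -!big_split /=; apply: eq_bigr => t _; ring.
Qed.

Definition bdiff m (c : R) (g : {ffun 'I_m -> T} -> R) :=
  forall (S S' : {ffun 'I_m -> T}) (i : 'I_m),
    (forall j, j != i -> S j = S' j) -> `|g S - g S'| <= c.

Lemma Ex_var m (c : R) g : 0 <= c -> bdiff c g ->
  Ex m (fun S => g S ^+ 2) - (Ex m g) ^+ 2 <= m%:R * c ^+ 2.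
Proof.
move=> c0; elim: m g => [|m IH] g bg.
  have [S0 _] : exists S0 : {ffun 'I_0 -> T}, True.
    by exists [ffun i : 'I_0 => ltac:(by case: i)].
  by rewrite !(Ex0 _ S0) subrr mul0r.
set G := fun t => Ex m (fun S => g (fcons t S)).
set H := fun t => Ex m (fun S => g (fcons t S) ^+ 2).
have EH : Ex m.+1 (fun S => g S ^+ 2) = \sum_t D t * H t by rewrite Ex_S.
have EG : Ex m.+1 g = \sum_t D t * G t by rewrite Ex_S.
have IHt : forall t, H t - G t ^+ 2 <= m%:R * c ^+ 2.
  move=> t; apply: IH => S S' i Hi; apply: (bg _ _ (lift ord0 i)) => j.
  case: (unliftP ord0 j) => [j' ->|->] Hj; last by rewrite !fcons0.
  rewrite !fconsS; apply: Hi; apply: contraNneq Hj => ->; by [].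
have Gd : forall t t', `|G t - G t'| <= c.
  move=> t t'; rewrite /G -ExB. apply: (le_trans (Ex_abs _)).
  rewrite -[c](Ex_cst m); apply: Ex_le => S; apply: (bg _ _ ord0) => j.
  case: (unliftP ord0 j) => [j' ->|->] Hj; first by rewrite !fconsS.
  by rewrite eqxx in Hj.
set Gb := \sum_t D t * G t.
have Gc : forall t, `|G t - Gb| <= c.
  move=> t; have -> : G t - Gb = \sum_t' D t' * (G t - G t').
    rewrite (eq_bigr (fun t' => D t' * G t + - (D t' * G t'))); last first.
      by move=> t' _; rewrite mulrBr.
    by rewrite big_split /= sumrN -mulr_suml D1 mul1r.
  apply: le_trans (ler_norm_sum _ _ _) _.
  rewrite -[c]mul1r -D1 mulr_suml; apply: ler_sum => t' _.
  by rewrite normrM ger0_norm ?D0 // ler_wpM2l ?D0.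
have V1 : \sum_t D t * (G t - Gb) ^+ 2 = \sum_t D t * G t ^+ 2 - Gb ^+ 2.
  rewrite sq_expand D1 -/Gb; ring.
have V2 : \sum_t D t * (G t - Gb) ^+ 2 <= c ^+ 2.
  rewrite -[c ^+ 2]mul1r -D1 mulr_suml; apply: ler_sum => t _.
  apply: ler_wpM2l; first exact: D0.
  have /andP[h1 h2] : -c <= G t - Gb <= c by rewrite -ler_norml Gc.
  rewrite -subr_ge0; have -> : c ^+ 2 - (G t - Gb) ^+ 2 = (c - (G t - Gb)) * (c + (G t - Gb)) by ring.
  apply: mulr_ge0; lra.
have V3 : \sum_t D t * H t <= \sum_t D t * G t ^+ 2 + m%:R * c ^+ 2.
  apply: (le_trans (y := \sum_t D t * (G t ^+ 2 + m%:R * c ^+ 2))).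
    apply: ler_sum => t _; apply: ler_wpM2l; first exact: D0.
    by have := IHt t; lra.
  rewrite (eq_bigr (fun t => D t * G t ^+ 2 + D t * (m%:R * c ^+ 2))).
    by rewrite big_split /= -mulr_suml D1 mul1r.
  by move=> t _; rewrite mulrDr.
rewrite EH EG -/Gb -/Gb; rewrite -natr1 mulrDl mul1r; lra.
Qed.

Lemma Ex_ext m f g : (forall S, f S = g S) -> Ex m f = Ex m g.
Proof. by move=> H; apply: eq_bigr => S _; rewrite H. Qed.

Section Mom.
Variable x : T.
Definition z (t : T) : R := (t == x)%:R - D x.
Definition Y m (S : {ffun 'I_m -> T}) : R := \sum_(i < m) z (S i).
Definition e j := \sum_t D t * z t ^+ j.
Definition M m j := Ex m (fun S => Y S ^+ j).

Lemma YS m t (S : {ffun 'I_m -> T}) : Y (fcons t S) = z t + Y S.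
Proof. by rewrite /Y big_ord_recl fcons0; congr (_ + _); apply: eq_bigr => i _; rewrite fconsS. Qed.

Lemma e1 : e 1 = 0.
Proof.
rewrite /e (eq_bigr (fun t => D t * (t == x)%:R + - (D t * D x))); last first.
  by move=> t _; rewrite expr1 /z mulrBr.
rewrite big_split /= sumrN -mulr_suml D1 mul1r (bigD1 x) //= eqxx mulr1 big1 ?addr0 ?subrr //.
by move=> t /negbTE ->; rewrite mulr0.
Qed.

Lemma sumD_poly a0 a1 a2 a3 a4 :
  \sum_t D t * (a0 + a1 * z t + a2 * z t ^+ 2 + a3 * z t ^+ 3 + a4 * z t ^+ 4) =
  a0 + a1 * e 1 + a2 * e 2 + a3 * e 3 + a4 * e 4.
Proof.
rewrite /e !mulr_sumr [in RHS](_ : a0 = \sum_t D t * a0); last by rewrite -mulr_suml D1 mul1r.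
rewrite -!big_split /=.
apply: eq_bigr => t _; rewrite expr1; ring.
Qed.

Lemma Ex_poly m a0 a1 a2 a3 a4 :
  Ex m (fun S => a0 + a1 * Y S + a2 * Y S ^+ 2 + a3 * Y S ^+ 3 + a4 * Y S ^+ 4) =
  a0 + a1 * M m 1 + a2 * M m 2 + a3 * M m 3 + a4 * M m 4.
Proof.
rewrite /M !ExD !ExZ Ex_cst; congr (_ + _ * _ + _ + _ + _).
Qed.

Lemma M_S m (phi : R -> R) :
  Ex m.+1 (fun S => phi (Y S)) = \sum_t D t * Ex m (fun S => phi (z t + Y S)).
Proof. by rewrite Ex_S; apply: eq_bigr => t _; congr (_ * _); apply: Ex_ext => S; rewrite YS. Qed.

Lemma moments m :
  [/\ M m 1 = 0, M m 2 = m%:R * e 2, M m 3 = m%:R * e 3 &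
      M m 4 = m%:R * e 4 + 3%:R * m%:R * (m%:R - 1) * e 2 ^+ 2].
Proof.
elim: m => [|m [IH1 IH2 IH3 IH4]].
  have [S0 _] : exists S0 : {ffun 'I_0 -> T}, True.
    by exists [ffun i : 'I_0 => ltac:(by case: i)].
  rewrite /M !(Ex0 _ S0) /Y big_ord0 /= ; split; rewrite ?expr0n /= ?mulr0n ?mul0r ?mulr0 ?add0r; rewrite ?mul0rn ?mulr0n ?mul0r ?mulr0 //.
have e1' := e1.
have Mx : forall j, M m.+1 j = \sum_t D t * Ex m (fun S => (z t + Y S) ^+ j).
  by move=> j; rewrite /M (M_S _ (fun y => y ^+ j)).
have ex : forall t j (a0 a1 a2 a3 a4 : R), (forall y, (z t + y) ^+ j = a0 + a1 * y + a2 * y ^+ 2 + a3 * y ^+ 3 + a4 * y ^+ 4) ->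
  Ex m (fun S => (z t + Y S) ^+ j) = a0 + a1 * M m 1 + a2 * M m 2 + a3 * M m 3 + a4 * M m 4.
  by move=> t j a0 a1 a2 a3 a4 H; rewrite -Ex_poly; apply: Ex_ext => S; rewrite H.
split.
- rewrite Mx (eq_bigr (fun t => D t * (0 + 1 * z t + 0 * z t ^+ 2 + 0 * z t ^+ 3 + 0 * z t ^+ 4))).
    by rewrite sumD_poly e1'; ring.
  move=> t _; rewrite (ex t 1 (z t) 1 0 0 0); last by move=> y; ring.
  rewrite IH1 IH2 IH3 IH4; congr (_ * _); ring.
- rewrite Mx (eq_bigr (fun t => D t * (M m 2 + 0 * z t + 1 * z t ^+ 2 + 0 * z t ^+ 3 + 0 * z t ^+ 4))).
    by rewrite sumD_poly e1' IH2 -natr1; ring.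
  move=> t _; rewrite (ex t 2 (z t ^+ 2) (2%:R * z t) 1 0 0); last by move=> y; ring.
  rewrite IH1 IH2 IH3 IH4; congr (_ * _); ring.
- rewrite Mx (eq_bigr (fun t => D t * (M m 3 + (3%:R * M m 2) * z t + 0 * z t ^+ 2 + 1 * z t ^+ 3 + 0 * z t ^+ 4))).
    by rewrite sumD_poly e1' IH2 IH3 -natr1; ring.
  move=> t _; rewrite (ex t 3 (z t ^+ 3) (3%:R * z t ^+ 2) (3%:R * z t) 1 0); last by move=> y; ring.
  rewrite IH1 IH2 IH3 IH4; congr (_ * _); ring.
- rewrite Mx (eq_bigr (fun t => D t * (M m 4 + (4%:R * M m 3) * z t + (6%:R * M m 2) * z t ^+ 2 + (4%:R * M m 1) * z t ^+ 3 + 1 * z t ^+ 4))).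
    by rewrite sumD_poly e1' IH1 IH2 IH3 IH4 -natr1; ring.
  move=> t _; rewrite (ex t 4 (z t ^+ 4) (4%:R * z t ^+ 3) (6%:R * z t ^+ 2) (4%:R * z t) 1); last by move=> y; ring.
  rewrite IH1; congr (_ * _); ring.
Qed.




Lemma Dx_le1 : D x <= 1.
Proof.
rewrite -D1 (bigD1 x) //= lerDl; apply: sumr_ge0 => t _; exact: D0.
Qed.

Lemma e2E : e 2 = D x * (1 - D x).
Proof.
rewrite /e (eq_bigr (fun t => D t * (t == x)%:R * (1 - 2%:R * D x) + D t * D x ^+ 2)); last first.
  by move=> t _; rewrite /z; case: (t == x) => /=; ring.
rewrite big_split /= -mulr_suml -mulr_suml D1 mul1r (bigD1 x) //= eqxx mulr1 big1 ?addr0; last first.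
  by move=> t /negbTE ->; rewrite mulr0.
ring.
Qed.

Lemma e4_le : e 4 <= e 2.
Proof.
apply: ler_sum => t _; apply: ler_wpM2l; first exact: D0.
have h0 := D0 x; have h1 := Dx_le1.
have [hz1 hz2] : -1 <= z t /\ z t <= 1 by rewrite /z; case: (t == x) => /=; split; lra.
have hz : z t ^+ 2 <= 1 by nra.
have -> : z t ^+ 4 = z t ^+ 2 * z t ^+ 2 by ring.
by rewrite ler_piMl ?sqr_ge0.
Qed.

Lemma e2_ge0 : 0 <= e 2.
Proof. by rewrite e2E; have h0 := D0 x; have h1 := Dx_le1; nra. Qed.

Lemma M4_le m : M m 4 <= M m 2 + 3%:R * M m 2 ^+ 2.
Proof.
have [_ h2 _ h4] := moments m; rewrite h2 h4.
have := e4_le; have := e2_ge0; have : (0 <= m%:R :> R) by [].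
move=> hm he2 he4.
have : m%:R * e 4 <= m%:R * e 2 by apply: ler_wpM2l.
have : 0 <= m%:R * e 2 ^+ 2 by apply: mulr_ge0 => //; apply: sqr_ge0.
nra.
Qed.

Lemma abs_lb (a y : R) : 0 < a -> y ^+ 2 / a - (4%:R / 27%:R) * y ^+ 4 / a ^+ 3 <= `|y|.
Proof.
move=> a0; set t := `|y|.
have ht : 0 <= t by rewrite /t normr_ge0.
have y2 : y ^+ 2 = t ^+ 2 by rewrite /t real_normK ?num_real.
have -> : y ^+ 4 = t ^+ 2 * t ^+ 2 by rewrite -y2; ring.
rewrite y2.
have a3 : 0 < a ^+ 3 by rewrite exprn_gt0.
rewrite -subr_ge0.
have -> : t - (t ^+ 2 / a - 4%:R / 27%:R * (t ^+ 2 * t ^+ 2) / a ^+ 3) =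
   (4%:R / 27%:R) * t * (t - 3%:R / 2%:R * a) ^+ 2 * (t + 3%:R * a) / a ^+ 3.
  by field; rewrite lt0r_neq0.
apply: divr_ge0; last exact: ltW.
apply: mulr_ge0; last by lra.
by apply: mulr_ge0; [apply: mulr_ge0; [lra|exact: ht] | apply: sqr_ge0].
Qed.

Lemma absY m : 0 < M m 2 ->
  M m 2 / Num.sqrt (1 + 3%:R * M m 2) <= Ex m (fun S => `|Y S|).
Proof.
move=> s0; set s := M m 2.
set r : R := Num.sqrt (1 + 3%:R * s).
have {}s0 : 0 < s by []. have s1 : (0 : R) < 1 + 3%:R * s by lra.
have r0 : 0 < r by rewrite /r sqrtr_gt0.
have r2 : r ^+ 2 = 1 + 3%:R * s by rewrite sqr_sqrtr // ltW.
set a : R := 2%:R / 3%:R * r.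
have a0 : 0 < a by rewrite /a; lra.
apply: le_trans (Ex_le (fun S => abs_lb (Y S) a0)).
have -> : Ex m (fun S => Y S ^+ 2 / a - 4%:R / 27%:R * Y S ^+ 4 / a ^+ 3) =
    0 + 0 * M m 1 + a^-1 * M m 2 + 0 * M m 3 + (- (4%:R / 27%:R) / a ^+ 3) * M m 4.
  rewrite -Ex_poly; apply: Ex_ext => S; rewrite /=; field; exact: lt0r_neq0.
have hM4 := M4_le m; rewrite -/s in hM4.
set w : R := r^-1.
have w0 : 0 < w by rewrite /w invr_gt0.
have ww : w ^+ 2 * (1 + 3%:R * s) = 1 by rewrite -r2 /w; field; exact: lt0r_neq0.
have ai : a^-1 = 3%:R / 2%:R * w by rewrite /a /w; field; exact: lt0r_neq0.
have a3 : (4%:R / 27%:R) / a ^+ 3 = 2%:R^-1 * w ^+ 3 by rewrite /a /w; field; exact: lt0r_neq0.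
rewrite mulNr a3 ai -/s.
have h1 : w ^+ 3 * M m 4 <= w ^+ 3 * (s + 3%:R * s ^+ 2) by apply: ler_wpM2l; [apply: ltW; apply: exprn_gt0|].
have h2 : w ^+ 3 * (s + 3%:R * s ^+ 2) = w * s.
  have -> : w ^+ 3 * (s + 3%:R * s ^+ 2) = w * s * (w ^+ 2 * (1 + 3%:R * s)) by ring.
  by rewrite ww mulr1.
have -> : s / r = w * s by rewrite /w mulrC.
lra.
Qed.
End Mom.

Lemma Ex_sum m (g : T -> {ffun 'I_m -> T} -> R) :
  Ex m (fun S => \sum_x g x S) = \sum_x Ex m (g x).
Proof.
rewrite /Ex (eq_bigr (fun S : {ffun 'I_m -> T} => \sum_x (\prod_(i < m) D (S i)) * g x S)); last first.
  by move=> S _; rewrite mulr_sumr.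
exact: exchange_big.
Qed.

Lemma Ex_sq m g a : Ex m (fun S => (g S - a) ^+ 2) =
  Ex m (fun S => g S ^+ 2) - 2%:R * a * Ex m g + a ^+ 2.
Proof.
rewrite (Ex_ext (g := fun S => g S ^+ 2 + (- (2%:R * a) * g S + a ^+ 2))); last by move=> S; ring.
by rewrite ExD ExD ExZ Ex_cst; ring.
Qed.

Lemma cheb m g b : b < Ex m g ->
  Ex m (fun S => ((g S <= b)%R)%:R) <=
  (Ex m (fun S => g S ^+ 2) - (Ex m g) ^+ 2) / (Ex m g - b) ^+ 2.
Proof.
move=> hb; set A := Ex m g; have {}hb : b < A by [].
have d0 : 0 < (A - b) ^+ 2 by rewrite exprn_gt0 // subr_gt0.
have -> : (Ex m (fun S => g S ^+ 2) - A ^+ 2) / (A - b) ^+ 2 =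
   Ex m (fun S => ((A - b) ^+ 2)^-1 * (g S - A) ^+ 2).
  by rewrite ExZ Ex_sq -/A mulrC; congr (_ * _); ring.
apply: Ex_le => S; case: (boolP (g S <= b)) => h /=.
  rewrite -(mulVf (lt0r_neq0 d0)); apply: ler_wpM2l; first by rewrite invr_ge0 ltW.
  have h1 : A - b <= A - g S by lra.
  have h2 : 0 <= A - b by lra.
  have -> : (g S - A) ^+ 2 = (A - g S) ^+ 2 by ring.
  by rewrite lerXn2r // ?nnegrE //; lra.
by apply: mulr_ge0; [rewrite invr_ge0 ltW | apply: sqr_ge0].
Qed.

Definition Fd m (S : {ffun 'I_m -> T}) : R := \sum_x `|Y x S|.

Lemma Ydiff m (S S' : {ffun 'I_m -> T}) i x :
  (forall j, j != i -> S j = S' j) ->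
  Y x S - Y x S' = (S i == x)%:R - (S' i == x)%:R.
Proof.
move=> H; rewrite /Y (bigD1 i) //= [X in _ - X](bigD1 i) //=.
have -> : \sum_(j < m | j != i) z x (S j) = \sum_(j < m | j != i) z x (S' j).
  by apply: eq_bigr => j /H ->.
rewrite /z; ring.
Qed.

Lemma sum_ind (a : T) : \sum_x (a == x)%:R = 1 :> R.
Proof.
rewrite (bigD1 a) //= eqxx big1 ?addr0 // => x hx.
by rewrite eq_sym (negbTE hx).
Qed.

Lemma Fd_bdiff m : bdiff 2%:R (@Fd m).
Proof.
move=> S S' i H; rewrite /Fd -sumrB.
apply: le_trans (ler_norm_sum _ _ _) _.
apply: (le_trans (y := \sum_x ((S i == x)%:R + (S' i == x)%:R))).
  apply: ler_sum => x _; apply: le_trans (ler_dist_dist _ _) _.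
  rewrite (Ydiff x H); apply: le_trans (ler_normB _ _) _.
  by rewrite !ger0_norm //.
by rewrite big_split /= !sum_ind.
Qed.

Lemma Fd_var m : Ex m (fun S => Fd S ^+ 2) - (Ex m (@Fd m)) ^+ 2 <= m%:R * 4%:R.
Proof.
have := @Ex_var m 2%:R (@Fd m) ltac:(lra) (@Fd_bdiff m).
have -> : (2%:R : R) ^+ 2 = 4%:R by rewrite expr2 -natrM.
by apply.
Qed.
End Gen.

End Aux.
Import Aux.
Unset Implicit Arguments.
Set Strict Implicit.

Lemma cnt (T : finType) m (S : {ffun 'I_m -> T}) x :
  #|[set i | S i == x]| = (\sum_i (S i == x))%N.
Proof. rewrite -sum1dep_card big_mkcond /=; apply: eq_bigr => i _; by case: (S i == x). Qed.

Section Main.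
Variables (R : realType) (n k : nat).
Hypotheses (hn : (1 <= n)%N) (hk : (2 <= k)%N).
Let T := prodspace n k.
Let D := @unifD R n k.
Let N := (k ^ n)%N.

Lemma N2 : (2 <= N)%N.
Proof. apply: leq_trans hk _; rewrite /N -{1}(expn1 k); apply: leq_pexp2l => //; exact: ltn_trans hk. Qed.

Lemma cardT : #|T| = N.
Proof. by rewrite /T /prodspace card_ffun !card_ord. Qed.

Let u : R := (N%:R)^-1.

Lemma Du t : D t = u.
Proof.
rewrite /D /unifD /unif_ord /u /N prodr_const card_ord natrX exprVn //.
Qed.

Lemma Nr0 : (N%:R : R) != 0.
Proof. by rewrite pnatr_eq0 -lt0n; apply: leq_trans N2. Qed.

Lemma D0 t : 0 <= D t.
Proof. by rewrite Du /u invr_ge0 ler0n. Qed.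

Lemma D1 : \sum_t D t = 1.
Proof.
rewrite (eq_bigr (fun _ => u)) => [|t _]; last exact: Du.
by rewrite sumr_const cardT -mulr_natl /u mulfV // Nr0.
Qed.

Lemma iidPr_split m (P : {ffun 'I_m -> T} -> bool) :
  @iidPr R T D m P = 1 - Ex D (fun S : {ffun 'I_m -> T} => (~~ P S)%:R).
Proof.
have h1 := Ex1 D1 m; rewrite /Ex in h1.
have hW : \sum_(S : {ffun 'I_m -> T}) \prod_(i < m) D (S i) = 1.
  by rewrite -[RHS]h1; apply: eq_bigr => S _; rewrite mulr1.
set E := Ex D (fun S : {ffun 'I_m -> T} => (~~ P S)%:R).
suff h : @iidPr R T D m P + E = 1 by rewrite -h addrK.
rewrite /E.
rewrite -{2}hW (bigID P) /=; congr (_ + _).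
rewrite /Ex [RHS]big_mkcond /=; apply: eq_bigr => S _.
by case: (P S) => /=; rewrite ?mulr0 ?mulr1.
Qed.

Lemma Y_cnt m x (S : {ffun 'I_m -> T}) :
  Y D x S = ((\sum_i (S i == x))%N)%:R - m%:R * u.
Proof.
rewrite /Y /z natr_sum sumrB; congr (_ - _).
by rewrite (eq_bigr (fun _ => u)) ?sumr_const ?card_ord ?mulr_natl // => i _; rewrite Du.
Qed.

Lemma dTV_Fd m (S : {ffun 'I_m -> T}) : (0 < m)%N ->
  dTV (emp R S) D = Fd D S / (2%:R * m%:R).
Proof.
move=> m0; have mr : (m%:R : R) != 0 by rewrite pnatr_eq0 -lt0n.
have -> : Fd D S / (2%:R * m%:R) = 2^-1 * ((\sum_x `|Y D x S|) / m%:R).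
  by rewrite /Fd; field.
rewrite /dTV mulr_suml; congr (_ * _).
apply: eq_bigr => x _; rewrite /emp cnt Du Y_cnt.
have -> : ((\sum_i (S i == x))%N%:R / m%:R - u : R) = (((\sum_i (S i == x))%N%:R - m%:R * u) / m%:R).
  by field.
rewrite normrM [`|_^-1|]ger0_norm //. have h : (0:R) <= m%:R^-1 by rewrite invr_ge0 ler0n. exact: h.
Qed.

Lemma M2E m x : M D x m 2 = m%:R * (u * (1 - u)).
Proof. by have [_ -> _ _] := moments D1 x m; rewrite (e2E D1) Du. Qed.

Lemma Nu : (N%:R : R) * u = 1.
Proof. by rewrite /u mulfV // Nr0. Qed.

Lemma u0 : 0 < u.
Proof. by rewrite /u invr_gt0 ltr0n; apply: leq_trans N2. Qed.

Lemma sumX m (S : {ffun 'I_m -> T}) :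
  \sum_x (((\sum_i (S i == x))%N)%:R : R) = m%:R.
Proof.
rewrite (eq_bigr (fun x => \sum_i ((S i == x)%:R : R))) => [|x _]; last by rewrite natr_sum.
rewrite exchange_big /= (eq_bigr (fun _ => 1)) => [|i _]; last exact: sum_ind.
by rewrite sumr_const card_ord.
Qed.

Lemma Fd_det m (S : {ffun 'I_m -> T}) :
  2%:R * m%:R - 2%:R * m%:R ^+ 2 * u <= Fd D S.
Proof.
have hu := u0.
apply: (le_trans (y := \sum_x (((\sum_i (S i == x))%N)%:R + m%:R * u
                 - 2%:R * m%:R * u * ((\sum_i (S i == x))%N)%:R))).
  rewrite sumrB big_split /= (@sumX m S) -[X in _ <= _ - X]mulr_sumr (@sumX m S) sumr_const cardT.
  have -> : (m%:R * u) *+ N = m%:R by rewrite -mulr_natr -mulrA (mulrC u) Nu mulr1.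
  lra.
apply: ler_sum => x _; rewrite Y_cnt.
case: (posnP (\sum_i (S i == x))%N) => [-> | h].
  rewrite mulr0 subr0 add0r sub0r normrN ger0_norm //.
  by apply: mulr_ge0 => //; apply: ltW.
have h1 : (1 : R) <= ((\sum_i (S i == x))%N)%:R by rewrite ler1n.
have hm : (0 : R) <= m%:R by [].
have hmu : 0 <= m%:R * u by apply: mulr_ge0 => //; apply: ltW.
apply: le_trans (ler_norm _); nra.
Qed.

Lemma ind_le1 m (P : {ffun 'I_m -> T} -> bool) : Ex D (fun S => (P S)%:R) <= 1.
Proof.
apply: (le_trans (y := Ex D (fun _ : {ffun 'I_m -> T} => 1))); last by rewrite (Ex1 D1).
apply: Ex_le; first exact: D0.
by move=> S; case: (P S); rewrite /= ?mulr1n ?mulr0n ?ler01.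
Qed.

Lemma main_bound (c : R) m (eps : R) :
  0 < c -> c < 17%:R / 1000%:R -> 0 < eps -> eps <= 2^-1 -> (0 < m)%N ->
  m%:R < c * N%:R / eps ^+ 2 ->
  1 - 1000%:R / N%:R <= @iidPr R T D m (fun S => eps < dTV (emp R S) D).
Proof.
move=> c0 c1 e0 e1 m0 hmc.
rewrite iidPr_split lerD2l lerN2.
have hN : (0 : R) < N%:R by rewrite ltr0n; apply: leq_trans N2.
have hu := u0; have hNu := Nu.
have hm : (0 : R) < m%:R by rewrite ltr0n.
case: (leqP N 9) => hN9.
  apply: le_trans (ind_le1 m _) _.
  rewrite ler_pdivlMr // mul1r ler_nat; by apply: leq_trans hN9 _.
case: (ltnP (2 * m) N) => h2m.
  apply: (le_trans (y := Ex D (fun S : {ffun 'I_m -> T} => 0))); last first.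
    rewrite (Ex_cst D1); apply: divr_ge0; [by [] | exact: ltW].
  apply: Ex_le; first exact: D0.
  move=> S; rewrite -leNgt (@dTV_Fd m S m0).
  have hd := Fd_det m S.
  have h2 : (2%:R * m%:R : R) < N%:R by rewrite -natrM ltr_nat.
  have hmu : 2%:R * m%:R * u < N%:R * u by rewrite ltr_pM2r.
  rewrite hNu in hmu.
  have h : ~~ (Fd D S / (2%:R * m%:R) <= eps).
    rewrite -ltNge ltr_pdivlMr ?mulr_gt0 //.
    have hfd : 2%:R * m%:R - 2%:R * m%:R ^+ 2 * u = 2%:R * m%:R * (1 - m%:R * u) by ring.
    nra.
  by rewrite (negbTE h).
set b : R := 2%:R * m%:R * eps.
have Ei : Ex D (fun S : {ffun 'I_m -> T} => (~~ (eps < dTV (emp R S) D))%:R) =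
          Ex D (fun S : {ffun 'I_m -> T} => ((Fd D S <= b)%R)%:R).
  apply: Ex_ext => S; rewrite -leNgt (@dTV_Fd m S m0) ler_pdivrMr ?mulr_gt0 //.
  by rewrite /b [eps * _]mulrC.
rewrite Ei.
set A := Ex D (@Fd R T D m).
set M := (m%:R : R).
set Nr := (N%:R : R).
set q := 1 - u.
set s := M * (u * q).
set r : R := Num.sqrt (1 + 3%:R * s).
have {}hNu : Nr * u = 1 by exact: hNu.
have {}hm : 0 < M by exact: hm.
have {}hmc : M < c * Nr / eps ^+ 2 by exact: hmc.
have hN10 : (10 : R) <= Nr by rewrite /Nr ler_nat.
have hq : 9%:R / 10%:R <= q by rewrite /q; nra.
have hq1 : q <= 1 by rewrite /q; lra.
have hs0 : 0 < s by rewrite /s; apply: mulr_gt0 => //; apply: mulr_gt0 => //; lra.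
have hs1 : (0 : R) < 1 + 3%:R * s by lra.
have r0 : 0 < r by rewrite /r sqrtr_gt0.
have r2 : r ^+ 2 = 1 + 3%:R * s by rewrite /r sqr_sqrtr // ltW.
set L := Nr * (s / r).
have hA : L <= A.
  rewrite /A /Fd (Ex_sum D (fun x S => `|Y D x S|)) /L.
  have -> : Nr * (s / r) = \sum_(x : T) (s / r) by rewrite sumr_const cardT -mulr_natl.
  apply: ler_sum => x _.
  have := @absY R T D D0 D1 x m; rewrite M2E => H; apply: H.
  exact: hs0.
have hL0 : 0 <= L by rewrite /L; apply: mulr_ge0; [lra | apply: divr_ge0; lra].
have hNs : Nr * s = M * q.
  have -> : Nr * s = M * q * (Nr * u) by rewrite /s; ring.
  by rewrite hNu mulr1.
have hLr : L * r = M * q by rewrite /L -hNs; field; exact: lt0r_neq0.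
have hL2 : L ^+ 2 * (1 + 3%:R * s) = (M * q) ^+ 2 by rewrite -r2 -hLr; ring.
have h2mN : Nr <= 2%:R * M by rewrite /Nr /M -natrM ler_nat.
have h1 : 1 + 3%:R * s <= 5%:R * M * u.
  have : Nr * u <= 2%:R * M * u by rewrite ler_pM2r.
  rewrite hNu /s => ha.
  have : M * (u * q) <= M * u by rewrite ler_pM2l // ler_piMr // ltW.
  lra.
have h3 : M * q ^+ 2 * Nr <= 5%:R * L ^+ 2.
  have h4 : (M * q) ^+ 2 <= L ^+ 2 * (5%:R * M * u).
    by rewrite -hL2; apply: ler_wpM2l => //; apply: sqr_ge0.
  have h5 : M * (M * q ^+ 2 * Nr) <= M * (5%:R * L ^+ 2).
    have e : L ^+ 2 * (5%:R * M * u) * Nr = M * (5%:R * L ^+ 2).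
      have -> : L ^+ 2 * (5%:R * M * u) * Nr = M * (5%:R * L ^+ 2) * (Nr * u) by ring.
      by rewrite hNu mulr1.
    rewrite -e.
    have -> : M * (M * q ^+ 2 * Nr) = (M * q) ^+ 2 * Nr by ring.
    have hN0 : 0 < Nr by exact: hN.
    by rewrite ler_pM2r.
  by rewrite ler_pM2l in h5.
have hL81 : 81%:R / 500%:R * (M * Nr) <= L ^+ 2.
  have : 81%:R / 100%:R <= q ^+ 2 by nra.
  have hMN : 0 < M * Nr by apply: mulr_gt0.
  nra.
have hb0 : 0 <= b by rewrite /b; apply: mulr_ge0; [apply: mulr_ge0 => //; lra | lra].
have hb2 : b ^+ 2 <= 68%:R / 1000%:R * (M * Nr).
  have he : M * eps ^+ 2 < c * Nr.
    by rewrite -ltr_pdivlMr ?exprn_gt0.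
  have : b ^+ 2 = 4%:R * M * (M * eps ^+ 2) by rewrite /b; ring.
  nra.
have hAb : 3%:R * A > 4%:R * b by nra.
have hbA : b < A by lra.
have hAb2 : L ^+ 2 / 16%:R <= (A - b) ^+ 2 by nra.
apply: (le_trans (cheb D0 D1 hbA)).
have hv := Fd_var D0 D1 m.
have hpos : 0 < (A - b) ^+ 2 by rewrite exprn_gt0 // subr_gt0.
rewrite ler_pdivrMr //.
apply: (le_trans hv).
have : 1000%:R / Nr * (81%:R / 8000%:R * (M * Nr)) <= 1000%:R / Nr * (A - b) ^+ 2.
  by rewrite ler_pM2l ?divr_gt0 //; nra.
have -> : 1000%:R / Nr * (81%:R / 8000%:R * (M * Nr)) = 81000%:R / 8000%:R * M.
  by field; rewrite /Nr Nr0.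
move=> hh.
have fin : M * 4%:R <= 1000%:R / Nr * (A - b) ^+ 2 by lra.
exact: fin.
Qed.
End Main.

Theorem theorem1 (R : realType) (c : R) :
  0 < c -> c < 17 / 1000 ->
  exists C : R, 0 < C /\
    forall (n k m : nat) (eps : R),
      (1 <= n)%N -> (2 <= k)%N ->
      0 < eps -> eps <= 2^-1 ->
      (0 < m)%N -> m%:R < c * (k ^ n)%:R / eps ^+ 2 ->
      @iidPr R (prodspace n k) (@unifD R n k) m
        (fun S => eps < dTV (emp R S) (@unifD R n k))
      >= 1 - C / (k ^ n)%:R.
Proof.
move=> c0 c1; exists 1000%:R; split; first by [].
move=> n k m eps hn hk e0 e1 m0 hmc.
exact: (@main_bound R n k hn hk c m eps c0 c1 e0 e1 m0 hmc).
Qed.
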